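(* Let $C\subseteq\mathbb{R}^n$ be a nonempty closed convex set and let $f:\mathbb{R}^n\times\mathbb{R}^n\to\mathbb{R}\cup\{+\infty\}$ satisfy $f(x,x)=0$ for all $x\in C$ and $C\times C\subseteq \operatorname{dom} f$. Let $S(EP)$ denote the set of $x^*\in C$ with $f(x^*,y)\ge 0$ for all $y\in C$. Assume: (A1) for every $x\in C$ the function $f(x,\cdot)$ is quasiconvex, and $f$ is upper semicontinuous on an open set containing $C\times C$; (A2) $f$ is pseudomonotone on $C$, i.e. for all $x,y\in C$, $f(x,y)\ge 0\Rightarrow f(y,x)\le 0$; and $f$ is paramonotone on $C$ with respect to $S(EP)$, i.e. if $x\in S(EP)$, $y\in C$ and $f(x,y)=f(y,x)=0$, then $y\in S(EP)$; (A3) $S(EP)\neq\emptyset$. Suppose the Normal-subgradient method described in the context does not terminate, let $\{x^k\}$ be the infinite sequence it generates, and let $\{x^{k_q}\}$ be the subsequence of $\{x^k\}$ consisting of all iterates belonging to $S(EP)$. Then: (a) if $\{x^{k_q}\}$ is infinite, then $\lim_{k\to\infty} d(x^k,S(EP))=0$; (b) if $\{x^{k_q}\}$ is finite, then $\{x^k\}$ converges to a point of $S(EP)$.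
   Context: A function $\varphi$ is quasiconvex if $\varphi((1-\lambda)x+\lambda y)\le\max\{\varphi(x),\varphi(y)\}$ for all $x,y$ and $\lambda\in[0,1]$. $d(x,S)$ is the Euclidean distance from $x$ to the set $S$. For $x\in C$ let $L_f(x):=\{y\in\mathbb{R}^n: f(x,y)<f(x,x)=0\}$ and $\partial_2^* f(x,x):=\{g\in\mathbb{R}^n:\ \langle g,y-x\rangle<0 \ \text{for all } y\in L_f(x)\}$. $P_C$ denotes the Euclidean projection onto $C$. Normal-subgradient method: fix a real sequence $\{\alpha_k\}$ with $\alpha_k>0$ for all $k$, $\sum_{k}\alpha_k=+\infty$ and $\sum_k\alpha_k^2<+\infty$. Choose $x^0\in C$. At iteration $k$ (with $x^k\in C$): take $g^k\in\partial_2^* f(x^k,x^k)$; if $g^k=0$, stop; otherwise replace $g^k$ by $g^k/\|g^k\|$ (so $\|g^k\|=1$), and set $x^{k+1}=P_C(x^k-\alpha_k g^k)$; if $x^{k+1}=x^k$, stop; otherwise increase $k$ by one and repeat. *)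

(* Defs.v *)
(* R : realType, points of R^n are row vectors 'rV[R]_n
   (with the library's product topology = Euclidean topology). *)
From HB Require Import structures.
From mathcomp Require Import all_boot all_order all_algebra.
From mathcomp Require Import all_classical all_reals all_analysis.
Set Implicit Arguments. Unset Strict Implicit. Unset Printing Implicit Defensive.
Import Order.TTheory GRing.Theory Num.Theory.
Import numFieldNormedType.Exports.
Local Open Scope classical_set_scope.
Local Open Scope ring_scope.

Section Defs.
Variables (R : realType) (n : nat).
Notation V := 'rV[R]_n.

Definition dotp (u v : V) : R := \sum_(i < n) u ord0 i * v ord0 i.
Definition enorm (u : V) : R := Num.sqrt (dotp u u).

Definition dist_set (x : V) (S : set V) : R := inf [set enorm (x - y) | y in S].

Definition quasiconvex (phi : V -> \bar R) : Prop :=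
  forall (x y : V) (l : R), 0 <= l <= 1 ->
    (phi ((1 - l) *: x + l *: y)%R <= Order.max (phi x) (phi y))%E.

Definition usc_at (F : V * V -> \bar R) (p : V * V) : Prop :=
  forall t : R, (F p < t%:E)%E -> \forall q \near p, (F q < t%:E)%E.

Definition SEP (C : set V) (f : V -> V -> \bar R) : set V :=
  [set xs | C xs /\ forall y, C y -> (0 <= f xs y)%E].

Definition pseudomonotone_on (C : set V) (f : V -> V -> \bar R) : Prop :=
  forall x y, C x -> C y -> (0 <= f x y)%E -> (f y x <= 0)%E.

Definition paramonotone_on (C : set V) (f : V -> V -> \bar R) : Prop :=
  forall x y, SEP C f x -> C y -> f x y = 0%E -> f y x = 0%E -> SEP C f y.

(* L_f(x) = { y | f(x,y) < f(x,x) = 0 } *)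
Definition Lf (f : V -> V -> \bar R) (x : V) : set V :=
  [set y | (f x y < 0)%E].

Definition normal_subdiff (f : V -> V -> \bar R) (x : V) : set V :=
  [set g | forall y, Lf f x y -> dotp g (y - x) < 0].

Definition is_proj (C : set V) (z p : V) : Prop :=
  C p /\ forall y, C y -> enorm (z - p) <= enorm (z - y).

End Defs.

(* Main.v *)
Require Import Defs.
From HB Require Import structures.
From mathcomp Require Import all_boot all_order all_algebra.
From mathcomp Require Import all_classical all_reals all_analysis.
From mathcomp Require Import ring lra.
Import Order.TTheory GRing.Theory Num.Theory.
Import numFieldNormedType.Exports.
Local Open Scope classical_set_scope.
Local Open Scope ring_scope.
Set Implicit Arguments. Unset Strict Implicit.


Section Aux.
Variables (R : realType) (n : nat).
Notation V := 'rV[R]_n.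
Implicit Types u v w : V.

Lemma dotpC u v : dotp u v = dotp v u.
Proof. by rewrite /dotp; apply: eq_bigr => i _; rewrite mulrC. Qed.

Lemma dotpDl u v w : dotp (u + v) w = dotp u w + dotp v w.
Proof. by rewrite /dotp -big_split; apply: eq_bigr => i _; rewrite !mxE mulrDl. Qed.

Lemma dotpZl (a : R) u w : dotp (a *: u) w = a * dotp u w.
Proof. by rewrite /dotp mulr_sumr; apply: eq_bigr => i _; rewrite !mxE mulrA. Qed.

Lemma dotpNl u w : dotp (- u) w = - dotp u w.
Proof. by rewrite -scaleN1r dotpZl mulN1r. Qed.

Lemma dotpBl u v w : dotp (u - v) w = dotp u w - dotp v w.
Proof. by rewrite dotpDl dotpNl. Qed.

Lemma dotpDr u v w : dotp w (u + v) = dotp w u + dotp w v.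
Proof. by rewrite dotpC dotpDl !(dotpC w). Qed.

Lemma dotpZr (a : R) u w : dotp w (a *: u) = a * dotp w u.
Proof. by rewrite dotpC dotpZl dotpC. Qed.

Lemma dotpBr u v w : dotp w (u - v) = dotp w u - dotp w v.
Proof. by rewrite dotpC dotpBl !(dotpC w). Qed.

Lemma dotp_ge0 u : 0 <= dotp u u.
Proof. by rewrite /dotp; apply: sumr_ge0 => i _; rewrite -expr2 sqr_ge0. Qed.

Lemma enorm_ge0 u : 0 <= enorm u.
Proof. exact: sqrtr_ge0. Qed.

Lemma enorm_sq u : enorm u ^+ 2 = dotp u u.
Proof. by rewrite /enorm sqr_sqrtr // dotp_ge0. Qed.

Lemma enorm_le u v : (enorm u <= enorm v) = (dotp u u <= dotp v v).
Proof. by rewrite /enorm ler_sqrt // dotp_ge0. Qed.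



Lemma coord_le u i : `|u ord0 i| <= enorm u.
Proof.
rewrite -(@ler_pXn2r _ 2) // ?nnegrE ?enorm_ge0 // enorm_sq real_normK ?num_real //.
rewrite /dotp (bigD1 i) //= -expr2 lerDl; apply: sumr_ge0 => j _.
by rewrite -expr2 sqr_ge0.
Qed.

Lemma mxnorm_le u : `|u| <= enorm u.
Proof.
rewrite [X in X <= _]/Num.norm /= mx_normrE; apply/bigmax_leP; split; first exact: enorm_ge0.
by move=> [i j] _ /=; rewrite (ord1 i); apply: coord_le.
Qed.

Lemma coord_le_mx u i : `|u ord0 i| <= `|u|.
Proof.
rewrite [X in _ <= X]/Num.norm /= mx_normrE.
exact: (le_bigmax 0 (fun ij : 'I_1 * 'I_n => `|u ij.1 ij.2|) (ord0, i)).
Qed.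

Lemma enorm_le_mx u : dotp u u <= n%:R * `|u| ^+ 2.
Proof.
have -> : n%:R * `|u| ^+ 2 = \sum_(i < n) `|u| ^+ 2 by rewrite sumr_const card_ord mulr_natl.
rewrite /dotp; apply: ler_sum => i _.
rewrite -expr2 -real_normK ?num_real //; rewrite lerXn2r ?nnegrE //.
exact: coord_le_mx.
Qed.


Lemma convmem (C : set V) (hC : convex_set C) p y (t : R) :
  C p -> C y -> 0 <= t -> t <= 1 -> C (t *: y + (1 - t) *: p).
Proof.
move=> Cp Cy t0 t1.
have := hC y p (Itv01 t0 t1). rewrite !inE => /(_ Cy Cp). by [].
Qed.

Lemma proj_var (C : set V) (hC : convex_set C) z p y :
  is_proj C z p -> C y -> dotp (z - p) (y - p) <= 0.
Proof.
move=> [Cp hmin] Cy.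
have key : forall t, 0 < t -> t <= 1 ->
    2 * dotp (z - p) (y - p) <= t * dotp (y - p) (y - p).
  move=> t t0 t1.
  have Cw := convmem hC Cp Cy (ltW t0) t1.
  have := hmin _ Cw; rewrite enorm_le.
  have -> : z - (t *: y + (1 - t) *: p) = (z - p) - t *: (y - p).
    by apply/rowP => i; rewrite !mxE; ring.
  move: (z - p) (y - p) => a b.
  rewrite !(dotpBl, dotpBr, dotpZl, dotpZr) [dotp b a]dotpC => h.
  have : t * (2 * dotp a b) <= t * (t * dotp b b) by lra.
  by rewrite ler_pM2l.
move: key; move: (dotp (z - p) (y - p)) (dotp (y - p) (y - p)) (dotp_ge0 (y - p)) => A B B0 key.
rewrite leNgt; apply/negP => A0.
have [AB|AB] := leP (B + 1) A.
  have := key 1 ltr01 (lexx _); lra.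
have t0 : 0 < A / (B + 1) by rewrite divr_gt0 // ltr_wpDl.
have t1 : A / (B + 1) <= 1 by rewrite ler_pdivrMr ?ltr_wpDl // mul1r ltW.
have := key _ t0 t1.
have : A / (B + 1) * B <= A.
  by rewrite mulrAC ler_pdivrMr ?ltr_wpDl //; nra.
lra.
Qed.

Lemma proj_nonexp (C : set V) (hC : convex_set C) z p y :
  is_proj C z p -> C y -> dotp (p - y) (p - y) <= dotp (z - y) (z - y).
Proof.
move=> hp Cy; have := proj_var hC hp Cy.
have -> : z - y = (z - p) + (p - y) by rewrite addrA subrK.
have -> : y - p = - (p - y) by rewrite opprB.
move: (z - p) (p - y) => a b.
have hN : dotp a (- b) = - dotp a b by rewrite dotpC dotpNl dotpC.
rewrite hN !(dotpDl, dotpDr) [dotp b a]dotpC.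
have := dotp_ge0 a; lra.
Qed.

Lemma dist_hlb y (S : set V) : has_lbound [set enorm (y - z) | z in S].
Proof. by exists 0 => _ [z _ <-]; exact: enorm_ge0. Qed.

Lemma dist_ge0 y (S : set V) : S !=set0 -> 0 <= dist_set y S.
Proof.
move=> [z Sz]; apply: lb_le_inf; first by exists (enorm (y - z)), z.
by move=> _ [w _ <-]; exact: enorm_ge0.
Qed.

Lemma dist_le y (S : set V) z : S z -> dist_set y S <= enorm (y - z).
Proof. by move=> Sz; apply: (ge_inf (dist_hlb y S)); exists z. Qed.

Lemma dist_approx y (S : set V) e : S !=set0 -> 0 < e ->
  exists2 z, S z & enorm (y - z) < dist_set y S + e.
Proof.
move=> [z Sz] e0.
have [_ [w Sw <-] h] := inf_adherent e0 (conj (ex_intro _ (enorm (y - z)) (ex_intro2 _ _ z Sz erefl)) (dist_hlb y S)).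
by exists w.
Qed.

End Aux.

Section Seq.
Variable R : realType.
Implicit Types a b beta : nat -> R.

Lemma telesc a b beta K :
  (forall k, (K <= k)%N -> a k.+1 + b k <= a k + beta k) ->
  forall m, a (K + m)%N + \sum_(K <= i < K + m) b i <= a K + \sum_(K <= i < K + m) beta i.
Proof.
move=> h; elim=> [|m IH]; first by rewrite addn0 !big_geq // !addr0.
rewrite addnS !big_nat_recr /= ?leq_addr //.
have := h (K + m)%N (leq_addr _ _); lra.
Qed.

End Seq.

Section Seq2.
Variable R : realType.
Implicit Types a b beta : nat -> R.
Lemma tail_small beta : (forall k, 0 <= beta k) -> cvgn (series beta) ->
  forall e, 0 < e -> exists K, forall m, (K <= m)%N -> \sum_(K <= i < m) beta i < e.
Proof.
move=> b0 cb e e0.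
have nd : nondecreasing_seq (series beta).
  by apply/nondecreasing_seqP => k; rewrite seriesSr lerDl.
have := cb; move/cvgrPdist_lt => /(_ e e0) [N _ HN].
exists N => m Nm; rewrite -sub_series_geq //.
have := nondecreasing_cvgn_le nd cb m.
have := HN N (leqnn N); rewrite /= => h.
move: h; rewrite ltr_norml => /andP [h1 h2]; lra.
Qed.

Lemma partial_le beta : (forall k, 0 <= beta k) -> cvgn (series beta) ->
  exists M, forall K m, \sum_(K <= i < m) beta i <= M.
Proof.
move=> b0 cb; exists (limn (series beta)) => K m.
have nd : nondecreasing_seq (series beta).
  by apply/nondecreasing_seqP => k; rewrite seriesSr lerDl.
have h0 : 0 <= limn (series beta).
  by have := nondecreasing_cvgn_le nd cb 0; rewrite /series /= big_geq.
have [Km|mK] := leqP K m; last by rewrite big_geq ?(ltnW mK).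
rewrite -sub_series_geq //; have := nondecreasing_cvgn_le nd cb m.
have : 0 <= series beta K by rewrite /series /=; apply: sumr_ge0.
lra.
Qed.


Lemma sum_mono beta K k m : (forall i, 0 <= beta i) -> (K <= k)%N ->
  \sum_(k <= i < m) beta i <= \sum_(K <= i < m) beta i.
Proof.
move=> b0 Kk; have [km|mk] := leqP k m; last first.
  by rewrite (big_geq (ltnW mk)); apply: sumr_ge0.
rewrite (big_cat_nat Kk km) /= lerDr; exact: sumr_ge0.
Qed.

Lemma qf_lemma d beta K : (forall k, 0 <= beta k) -> cvgn (series beta) ->
  (forall m, (K <= m)%N -> d m.+1 <= d m + beta m) ->
  (forall e, 0 < e -> forall K', exists2 k, (K' <= k)%N & d k < e) ->
  forall e, 0 < e -> exists N, forall m, (N <= m)%N -> d m < e.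
Proof.
move=> b0 cb hd hl e e0.
have e2 : 0 < e / 2 by rewrite divr_gt0.
have [K1 HK1] := tail_small b0 cb e2.
have [k Kk dk] := hl _ e2 (maxn K K1).
have hK1 : (K1 <= k)%N by apply: leq_trans Kk; rewrite leq_maxr.
have hK : (K <= k)%N by apply: leq_trans Kk; rewrite leq_maxl.
exists k => m km.
have := @telesc R d (fun=> 0) beta k.
have hyp : forall k0, (k <= k0)%N -> d k0.+1 + 0 <= d k0 + beta k0.
  by move=> k0 kk0; rewrite addr0; apply: hd; apply: leq_trans kk0.
move=> /(_ hyp (m - k)%N); rewrite subnKC // big1 // addr0.
have := HK1 m (leq_trans hK1 km).
have := sum_mono m b0 hK1.
have -> : e = e / 2 + e / 2 by field.
lra.
Qed.
End Seq2.

Unset Implicit Arguments.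
Section Main.
Variables (R : realType) (n : nat) (C : set 'rV[R]_n)
  (f : 'rV[R]_n -> 'rV[R]_n -> \bar R)
  (alpha : R ^nat) (x g : nat -> 'rV[R]_n).
Notation V := 'rV[R]_n.
Notation S := (SEP C f).
Hypothesis hCl : closed C.
Hypothesis hCv : convex_set C.
Hypothesis hpm : pseudomonotone_on C f.
Hypothesis hpa : paramonotone_on C f.
Hypothesis ha : forall k, 0 < alpha k.
Hypothesis hx0 : C (x 0%N).
Hypothesis hg : forall k, normal_subdiff f (x k) (g k).
Hypothesis hg0 : forall k, g k != 0.
Hypothesis hproj : forall k, is_proj C (x k - alpha k *: ((enorm (g k))^-1 *: g k)) (x k.+1).

Definition gh k := (enorm (g k))^-1 *: g k.

Lemma xC k : C (x k).
Proof. by elim: k => [//|k _]; case: (hproj k). Qed.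

Lemma dotp_eq0 (u : V) : dotp u u = 0 -> u = 0.
Proof.
move=> h; apply/rowP => i; rewrite mxE.
have : (fun j : 'I_n => u ord0 j * u ord0 j) i = 0.
  move/psumr_eq0P : h; apply => //= j _; by rewrite -expr2 sqr_ge0.
by move/eqP; rewrite -expr2 sqrf_eq0 => /eqP.
Qed.

Lemma gh_unit k : dotp (gh k) (gh k) = 1.
Proof.
rewrite /gh dotpZl dotpZr -enorm_sq.
have : enorm (g k) != 0.
  apply/negP => /eqP h; move: (hg0 k); rewrite (dotp_eq0 (g k)) ?eqxx //.
  by rewrite -enorm_sq h expr2 mulr0.
move: (enorm (g k)) => c c0; rewrite expr2; by field.
Qed.

Lemma notS_neg u y : C u -> ~ S u -> S y -> (f u y < 0)%E.
Proof.
move=> Cu nSu Sy; have [Cy hy] := Sy.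
have h1 : (f u y <= 0)%E by apply: hpm => //; apply: hy.
rewrite lt_neqAle h1 andbT; apply/negP => /eqP e0.
apply: nSu; apply: (hpa y u) => //.
apply/eqP; rewrite eq_le hy // andbT.
by apply: hpm => //; rewrite e0.
Qed.

Lemma c_pos k y : ~ S (x k) -> S y -> 0 < dotp (gh k) (x k - y).
Proof.
move=> nS Sy.
have hL : Lf f (x k) y by apply: notS_neg => //; apply: xC.
have := hg k y hL; rewrite /gh dotpZl.
have -> : y - x k = - (x k - y) by rewrite opprB.
rewrite dotpC dotpNl dotpC oppr_lt0 => h.
apply: mulr_gt0 => //; rewrite invr_gt0 lt_neqAle enorm_ge0 andbT.
apply/negP => /eqP e0; move: (hg0 k); rewrite (dotp_eq0 (g k)) ?eqxx //.
by rewrite -enorm_sq -e0 expr2 mulr0.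
Qed.

Lemma step k y : C y ->
  dotp (x k.+1 - y) (x k.+1 - y) <=
  dotp (x k - y) (x k - y) - 2 * alpha k * dotp (gh k) (x k - y) + alpha k ^+ 2.
Proof.
move=> Cy; have := proj_nonexp hCv (hproj k) Cy.
have -> : x k - alpha k *: ((enorm (g k))^-1 *: g k) - y = (x k - y) - alpha k *: gh k.
  by rewrite /gh addrAC.
have := gh_unit k; move: (x k - y) (gh k) => a b hb.
rewrite !(dotpBl, dotpBr, dotpZl, dotpZr) hb [dotp a b]dotpC.
move=> h; apply: (le_trans h); rewrite le_eqVlt; apply/orP; left; apply/eqP; ring.
Qed.


Lemma enorm0 : enorm (0 : V) = 0.
Proof. by rewrite /enorm /dotp big1 ?sqrtr0 // => i _; rewrite mxE mul0r. Qed.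

Lemma dotp0r (u : V) : dotp u 0 = 0.
Proof. by rewrite /dotp big1 // => i _; rewrite mxE mulr0. Qed.

Lemma dist_step m : S !=set0 ->
  dist_set (x m.+1) S ^+ 2 <= dist_set (x m) S ^+ 2 + alpha m ^+ 2.
Proof.
move=> Sn0.
have D1 := dist_ge0 (x m.+1) Sn0.
have D0 := dist_ge0 (x m) Sn0.
have [Sm|nSm] := pselect (S (x m)).
  have -> : dist_set (x m) S = 0.
    by apply/eqP; rewrite eq_le D0 andbT; have := dist_le (x m) Sm; rewrite subrr enorm0.
  have h1 := dist_le (x m.+1) Sm.
  have := step m (x m) (xC m); rewrite subrr !dotp0r !mulr0 subr0 add0r -enorm_sq => h2.
  rewrite expr0n /= add0r; apply: le_trans h2.
  by rewrite lerXn2r ?nnegrE ?enorm_ge0.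
apply/ler_addgt0Pr => e e0.
set D := dist_set (x m) S.
pose e' := e / (2 * D + 1 + e).
have den : 0 < 2 * D + 1 + e by lra.
have e'0 : 0 < e' by rewrite divr_gt0.
have e'1 : e' <= 1 by rewrite ler_pdivrMr // mul1r; lra.
have e'2 : e' * (2 * D + 1) <= e.
  rewrite /e' mulrAC ler_pdivrMr //; nra.
have [z Sz hz] := dist_approx (x m) Sn0 e'0.
have h1 := dist_le (x m.+1) Sz.
have := step m z (proj1 Sz); rewrite -!enorm_sq => h2.
have h3 := c_pos m z nSm Sz.
have h4 := ha m.
have h5 : dist_set (x m.+1) S ^+ 2 <= enorm (x m.+1 - z) ^+ 2.
  by rewrite lerXn2r ?nnegrE ?enorm_ge0.
have h6 : enorm (x m - z) ^+ 2 <= (D + e') ^+ 2.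
  by rewrite lerXn2r ?nnegrE ?enorm_ge0 //; [lra | lra].
have h7 : 0 <= 2 * alpha m * dotp (gh m) (x m - z).
  by apply: mulr_ge0; [apply: mulr_ge0; lra | lra].
have : (D + e') ^+ 2 <= D ^+ 2 + e by rewrite !expr2; nra.
lra.
Qed.

Lemma inf_unbounded (A : set nat) : infinite_set A -> forall K, exists2 k, (K <= k)%N & A k.
Proof.
move=> iA K; apply: contrapT => hn; apply: iA.
apply: (sub_finite_set _ (finite_II K)) => k Ak /=.
by rewrite ltnNge; apply/negP => Kk; apply: hn; exists k.
Qed.

Lemma part_a : S !=set0 -> cvgn (series (fun k => alpha k ^+ 2)) ->
  infinite_set [set k | S (x k)] ->
  (fun k => dist_set (x k) S) @ \oo --> 0.
Proof.
move=> Sn0 cb iA.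
have b0 : forall k, 0 <= alpha k ^+ 2 by move=> k; rewrite sqr_ge0.
have hq := @qf_lemma R (fun m => dist_set (x m) S ^+ 2) _ 0%N b0 cb
  (fun m _ => dist_step m Sn0).
have hl : forall e, 0 < e -> forall K', exists2 k, (K' <= k)%N & dist_set (x k) S ^+ 2 < e.
  move=> e e0 K'; have [k Kk Sk] := inf_unbounded _ iA K'.
  exists k => //; suff -> : dist_set (x k) S = 0 by rewrite expr0n.
  apply/eqP; rewrite eq_le dist_ge0 // andbT.
  by have := dist_le (x k) Sk; rewrite subrr enorm0.
apply/cvgrPdist_lt => e e0.
have e20 : 0 < e ^+ 2 by rewrite exprn_gt0.
have [N HN] := hq hl _ e20.
exists N => // m Nm /=.
rewrite sub0r normrN ger0_norm ?dist_ge0 //.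
have := HN m Nm; have := dist_ge0 (x m) Sn0; rewrite !expr2; nra.
Qed.

Lemma en_pos k : 0 < enorm (g k).
Proof.
rewrite lt_neqAle enorm_ge0 andbT eq_sym.
apply/negP => /eqP e0; move: (hg0 k); rewrite (dotp_eq0 (g k)) ?eqxx //.
by rewrite -enorm_sq e0 expr2 mulr0.
Qed.

Lemma fin_bound (A : set nat) : finite_set A -> exists K, forall k, A k -> (k < K)%N.
Proof.
move/finite_seqP => [s ->]; exists (\max_(i <- s) i).+1 => k /= ks.
by rewrite ltnS; exact: (@leq_bigmax_seq _ s xpredT (fun i => i) k ks).
Qed.

Lemma liminf_c xs K : S xs -> (forall k, (K <= k)%N -> ~ S (x k)) ->
  (series alpha @ \oo --> +oo) -> cvgn (series (fun k => alpha k ^+ 2)) ->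
  forall eta, 0 < eta -> forall K', exists2 k, (maxn K K' <= k)%N & dotp (gh k) (x k - xs) < eta.
Proof.
move=> Sxs hK hdiv cb eta eta0 K'.
set K2 := maxn K K'.
apply: contrapT => hn.
have hge : forall k, (K2 <= k)%N -> eta <= dotp (gh k) (x k - xs).
  move=> k Kk; rewrite leNgt; apply/negP => lt; apply: hn; by exists k.
pose a := fun k => dotp (x k - xs) (x k - xs).
have hs : forall k, (K2 <= k)%N -> a k.+1 + 2 * eta * alpha k <= a k + alpha k ^+ 2.
  move=> k Kk; have := step k xs (proj1 Sxs); have := hge k Kk; have := ha k; rewrite /a; nra.
have b0 : forall k, 0 <= alpha k ^+ 2 by move=> k; rewrite sqr_ge0.
have [M HM] := partial_le b0 cb.
have ha0 : forall k, 0 <= a k by move=> k; apply: dotp_ge0.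
have hsum : forall m, \sum_(K2 <= i < K2 + m) alpha i <= (a K2 + M) / (2 * eta).
  move=> m; have := telesc hs m; rewrite -mulr_sumr.
  have e2 : 0 < 2 * eta by rewrite mulr_gt0.
  rewrite ler_pdivlMr //.
  have := HM K2 (K2 + m)%N; have := ha0 (K2 + m)%N; lra.
have := hdiv; move/cvgryPge => /(_ (series alpha K2 + (a K2 + M) / (2 * eta) + 1)) [N _ HN].
pose N2 := maxn N K2.
have := HN N2 (leq_maxl _ _); have := hsum (N2 - K2)%N; rewrite subnKC ?leq_maxr //.
rewrite -sub_series_geq ?leq_maxr //=. lra.
Qed.

Lemma bounded_after xs K : S xs -> (forall k, (K <= k)%N -> ~ S (x k)) ->
  cvgn (series (fun k => alpha k ^+ 2)) ->
  exists B, forall k, (K <= k)%N -> dotp (x k - xs) (x k - xs) <= B.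
Proof.
move=> Sxs hK cb.
pose a := fun k => dotp (x k - xs) (x k - xs).
have hs : forall k, (K <= k)%N -> a k.+1 + 0 <= a k + alpha k ^+ 2.
  move=> k Kk; have := step k xs (proj1 Sxs); have := c_pos k xs (hK k Kk) Sxs.
  have := ha k; rewrite /a; nra.
have b0 : forall k, 0 <= alpha k ^+ 2 by move=> k; rewrite sqr_ge0.
have [M HM] := partial_le b0 cb.
exists (a K + M) => k Kk.
have := telesc hs (k - K)%N; rewrite subnKC // big1 // addr0.
have := HM K k; rewrite /a; lra.
Qed.

Lemma ballE (u v : V) e : ball u e v = (`|u - v| < e).
Proof. by rewrite -ball_normE. Qed.

Lemma part_b : (exists U : set (V * V), open U /\
     (forall u v, C u -> C v -> U (u, v)) /\
     (forall p, U p -> usc_at (fun q => f q.1 q.2) p)) ->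
  S !=set0 -> (series alpha @ \oo --> +oo) ->
  cvgn (series (fun k => alpha k ^+ 2)) ->
  finite_set [set k | S (x k)] ->
  exists xs, S xs /\ x @ \oo --> xs.
Proof.
move=> [U [_ [hUC husc]]] [xs Sxs] hdiv cb fA.
have [K hK0] := fin_bound _ fA.
have hK : forall k, (K <= k)%N -> ~ S (x k).
  by move=> k Kk Sk; have := hK0 k Sk; rewrite ltnNge Kk.
have [B HB] := bounded_after xs K Sxs hK cb.
pose c := fun k => dotp (gh k) (x k - xs).
pose D := [set p : nat * R | (K <= p.1)%N /\ 0 < p.2].
pose Bs := fun p : nat * R => x @` [set k | (p.1 <= k)%N /\ c k < p.2].
pose F := filter_from D Bs.
have FF : Filter F.
  apply: filter_from_filter; first by exists (K, 1); split => //=.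
  move=> [i1 i2] [j1 j2] [/= Ki i0] [/= Kj j0].
  exists (maxn i1 j1, Num.min i2 j2).
    split => /=; first by rewrite leq_max Ki.
    by rewrite lt_min i0 j0.
  move=> _ [k [/= hk1 hk2] <-].
  move: hk1; rewrite geq_max => /andP [h1 h2].
  move: hk2; rewrite lt_min => /andP [h3 h4].
  by split; exists k.
have PF : ProperFilter F.
  apply: (filter_from_proper FF) => -[i1 i2] [/= Ki i0].
  have [k hk ck] := liminf_c xs K Sxs hK hdiv cb i2 i0 i1.
  exists (x k); exists k => //; split => //; exact: leq_trans (leq_maxr _ _) hk.
have B0 : 0 <= B by apply: le_trans (HB K (leqnn K)); apply: dotp_ge0.
pose r := Num.sqrt B + 1.
have r0 : 0 < r by rewrite /r ltr_wpDl ?sqrtr_ge0.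
pose T := C `&` closed_ball xs r.
have cT : compact T.
  apply: bounded_closed_compact; last by apply: closedI => //; apply: closed_ball_closed.
  rewrite /= /bounded_near; exists (r + `|xs|); split; first by rewrite num_real.
  move=> M hM v [_ Tv] /=.
  move: Tv; rewrite closed_ballE // /closed_ball_ /= => Tv.
  have hv : v = xs - (xs - v) by rewrite opprB addrC subrK.
  rewrite hv; apply: le_trans (ler_normB _ _) _.
  lra.
have FT : F T.
  exists (K, 1); first by split => //=.
  move=> _ [j [/= Kj _] <-]; split; first exact: xC.
  rewrite closed_ballE // /closed_ball_ /= distrC.
  apply: le_trans (mxnorm_le _) _.
  have : enorm (x j - xs) <= Num.sqrt B by rewrite /enorm; apply: ler_wsqrtr; apply: HB.
  rewrite /r; lra.
have [xb [[Cxb _] clx]] := cT F PF FT.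
have Sxb : S xb.
  apply: contrapT => nSb.
  have fneg := notS_neg xb xs Cxb nSb Sxs.
  have := husc (xb, xs) (hUC _ _ Cxb (proj1 Sxs)) 0 fneg.
  move/nbhs_ballP => [e e0 he].
  have e20 : 0 < e / 2 by rewrite divr_gt0.
  have FB : F (Bs (K, e / 2)) by exists (K, e / 2).
  have [_ [[k [/= Kk ck] <-] bk]] := clx _ (ball xb e) FB (nbhsx_ballx xb e e0).
  pose b := xs + (e / 2) *: gh k.
  have hb : ball (xb, xs) e (x k, b).
    split => //=; rewrite ballE.
    have -> : xs - b = - ((e / 2) *: gh k) by rewrite /b opprD addrA subrr add0r.
    rewrite normrN; apply: le_lt_trans (mxnorm_le _) _.
    rewrite /enorm dotpZl dotpZr gh_unit mulr1 -expr2 sqrtr_sqr ger0_norm; lra.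
  have fkb := he _ hb; rewrite /= in fkb.
  have := hg k b fkb.
  have hgk : g k = enorm (g k) *: gh k.
    by rewrite /gh scalerA mulfV ?scale1r // gt_eqF // en_pos.
  rewrite hgk dotpZl pmulr_rlt0 ?en_pos //.
  have -> : b - x k = (e / 2) *: gh k - (x k - xs).
    by apply/rowP => i; rewrite !mxE; ring.
  rewrite dotpBr dotpZr gh_unit mulr1.
  rewrite /c /= in ck; lra.
exists xb; split => //.
pose a := fun k => dotp (x k - xb) (x k - xb).
have hs : forall m, (K <= m)%N -> a m.+1 <= a m + alpha m ^+ 2.
  move=> m Km; have := step m xb Cxb; have := c_pos m xb (hK m Km) Sxb.
  have := ha m; rewrite /a; nra.
have hl : forall e, 0 < e -> forall K', exists2 k, (K' <= k)%N & a k < e.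
  move=> e e0 K'.
  have n1 : 0 < n%:R + 1 :> R by rewrite ltr_wpDl.
  pose d := Num.sqrt (e / (n%:R + 1)).
  have d0 : 0 < d by rewrite sqrtr_gt0 divr_gt0.
  have FB : F (Bs (maxn K K', 1)) by exists (maxn K K', 1) => //; split => //=; rewrite leq_maxl.
  have [_ [[k [/= Kk _] <-] bk]] := clx _ (ball xb d) FB (nbhsx_ballx xb d d0).
  exists k; first by apply: leq_trans Kk; rewrite leq_maxr.
  move: bk; rewrite ballE distrC => bk.
  have h1 := enorm_le_mx (x k - xb).
  have h2 : d ^+ 2 = e / (n%:R + 1) by rewrite sqr_sqrtr // ltW // divr_gt0.
  have h3 : n%:R * (e / (n%:R + 1)) < e.
    by rewrite mulrA ltr_pdivrMr //; lra.
  have h4 : `|x k - xb| ^+ 2 <= d ^+ 2 by rewrite lerXn2r ?nnegrE // ltW.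
  have h5 : 0 <= n%:R :> R by [].
  rewrite /a; nra.
have b0 : forall k, 0 <= alpha k ^+ 2 by move=> k; rewrite sqr_ge0.
have hq := qf_lemma b0 cb hs hl.
apply/cvgrPdist_lt => e e0.
have e20 : 0 < e ^+ 2 by rewrite exprn_gt0.
have [N HN] := hq _ e20.
exists N => // m Nm /=.
apply: le_lt_trans (mxnorm_le _) _.
have h1 := HN m Nm.
have h2 : enorm (xb - x m) ^+ 2 = a m.
  by rewrite enorm_sq /a -opprB dotpNl dotpC dotpNl opprK.
have := enorm_ge0 (xb - x m); nra.
Qed.

End Main.

Unset Implicit Arguments.
Theorem theorem1 (R : realType) (n : nat) (C : set 'rV[R]_n)
  (f : 'rV[R]_n -> 'rV[R]_n -> \bar R)
  (alpha : R ^nat) (x g : nat -> 'rV[R]_n) :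
  (* standing assumptions on C and f *)
  C !=set0 -> closed C -> convex_set C ->
  (forall u v, f u v != -oo%E) ->
  (forall u, C u -> f u u = 0%E) ->
  (forall u v, C u -> C v -> f u v \is a fin_num) ->
  (* (A1) *)
  (forall u, C u -> quasiconvex (f u)) ->
  (exists U : set ('rV[R]_n * 'rV[R]_n), open U /\
     (forall u v, C u -> C v -> U (u, v)) /\
     (forall p, U p -> usc_at (fun q => f q.1 q.2) p)) ->
  (* (A2) *)
  pseudomonotone_on C f -> paramonotone_on C f ->
  (* (A3) *)
  SEP C f !=set0 ->
  (* step sizes *)
  (forall k, 0 < alpha k) ->
  (series alpha @ \oo --> +oo) ->
  cvgn (series (fun k => alpha k ^+ 2)) ->
  (* the Normal-subgradient method, not terminating *)
  C (x 0%N) ->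
  (forall k, normal_subdiff f (x k) (g k)) ->
  (forall k, g k != 0) ->
  (forall k, is_proj C (x k - alpha k *: ((enorm (g k))^-1 *: g k)) (x k.+1)) ->
  (forall k, x k.+1 != x k) ->
  (* conclusions *)
  (infinite_set [set k | SEP C f (x k)] ->
     (fun k => dist_set (x k) (SEP C f)) @ \oo --> 0) /\
  (finite_set [set k | SEP C f (x k)] ->
     exists xs, SEP C f xs /\ x @ \oo --> xs).
Proof.
move=> _ hCl hCv _ _ _ _ hU hpm hpa hS ha hdiv cb hx0 hg hg0 hproj _.
split.
- by move=> iA; apply: part_a.
- by move=> fA; apply: part_b.
Qed.
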